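(* Let $f \in \mathbb{F}_q[x]$ be a polynomial of degree $n$, let $\tilde{\sigma}(x) = x^{q^t} \bmod f$ be a power of the Frobenius of $\mathbb{F}_q[x] / f$, and let $d = p_1^{e_1} p_2^{e_2} \cdots p_\ell^{e_\ell}$ be an integer given in factored form (distinct primes $p_i$, $e_i\ge1$). Then the sequence $\tilde{\sigma}^{d / p_1}(x) \bmod f, \dots, \tilde{\sigma}^{d / p_\ell}(x) \bmod f$ can be computed in $O(\mathsf{C}(n)(\log \ell)(\log d) + \ell\,\mathsf{M}(n))$ operations in $\mathbb{F}_q$.
   Context: The Frobenius of $\mathbb{F}_q[x]/f$ is the $\mathbb{F}_q$-algebra endomorphism determined by $x\mapsto x^q$; a power $\tilde\sigma$ of it is represented by $\tilde\sigma(x)\in\mathbb{F}_q[x]/f$, and $\tilde\sigma^{k}(x)$ denotes the $k$-fold composition, computed by modular composition. $\mathsf{M}(n)$ denotes the cost of multiplying two polynomials of degree $n$ over $\mathbb{F}_q$, and $\mathsf{C}(n)$ denotes the cost of a modular composition $g(h)\bmod f$ for polynomials of degree $n$. *)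

(* Defs.v *)
From HB Require Import structures.
From mathcomp Require Import all_boot all_order all_algebra.
Set Implicit Arguments. Unset Strict Implicit. Unset Printing Implicit Defensive.
Import GRing.Theory.
Local Open Scope ring_scope.

(* Each instruction costs one operation in F.  Registers are numbered from 0;
   the inputs occupy the first registers, each instruction appends one register. *)
Inductive instr (F : Type) :=
| IConst of F
| IAdd of nat & nat
| ISub of nat & nat
| IMul of nat & nat
| IInv of nat.   (* field inverse, total (0^-1 = 0) *)

Record slp (F : Type) := SLP { slp_instrs : seq (instr F); slp_outs : seq nat }.

Definition slp_cost (F : Type) (P : slp F) : nat := size (slp_instrs P).

Definition exec_instr (F : fieldType) (env : seq F) (i : instr F) : F :=
  match i with
  | IConst c => c
  | IAdd a b => env`_a + env`_b
  | ISub a b => env`_a - env`_b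
  | IMul a b => env`_a * env`_b
  | IInv a => (env`_a)^-1
  end.

Definition slp_eval (F : fieldType) (P : slp F) (inp : seq F) : seq F :=
  let env := foldl (fun env i => rcons env (exec_instr env i)) inp (slp_instrs P) in
  [seq env`_j | j <- slp_outs P].

Definition coefs (F : fieldType) (k : nat) (p : {poly F}) : seq F :=
  [seq p`_i | i <- iota 0 k].

Definition mul_cost_bound (F : fieldType) (M : nat -> nat) : Prop :=
  forall n, exists P : slp F, (slp_cost P <= M n)%N /\
    forall a b : {poly F}, (size a <= n.+1)%N -> (size b <= n.+1)%N ->
      slp_eval P (coefs n.+1 a ++ coefs n.+1 b) = coefs (n + n).+1 (a * b).

Definition modcomp_cost_bound (F : fieldType) (C : nat -> nat) : Prop :=
  forall n, exists P : slp F, (slp_cost P <= C n)%N /\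
    forall f g h : {poly F}, size f = n.+1 -> (size g <= n)%N -> (size h <= n)%N ->
      slp_eval P (coefs n.+1 f ++ coefs n g ++ coefs n h) = coefs n ((g \Po h) %% f).

(* sigma is the F-algebra endomorphism of F[x]/f with sigma(x) = s;
   sigma^k(x) mod f, computed by k-fold modular composition *)
Definition sigma_pow (F : fieldType) (f s : {poly F}) (k : nat) : {poly F} :=
  iter k (fun h => (s \Po h) %% f) ('X %% f).

Definition factored_form (ps : seq (nat * nat)) : bool :=
  uniq (map fst ps) && all (fun pe => prime pe.1 && (0 < pe.2)%N) ps.

Definition fvalue (ps : seq (nat * nat)) : nat := (\prod_(pe <- ps) pe.1 ^ pe.2)%N.

(* Main.v *)
Require Import Defs.
From HB Require Import structures.
From mathcomp Require Import all_boot all_order all_algebra all_fingroup all_solvable all_field.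
From mathcomp Require Import zify.
Import GRing.Theory.
Set Implicit Arguments. Unset Strict Implicit. Unset Printing Implicit Defensive.
Local Open Scope ring_scope.

Lemma card_pnat (F : finFieldType) : [pchar F].-nat #|F|.
Proof.
have [p pr_p pF] := finPcharP F.
have ab := fin_ring_pchar_abelem pF.
have pg := abelem_pgroup ab.
rewrite /pgroup cardsT in pg.
apply: sub_in_pnat pg => x _; rewrite !inE => /eqP ->; exact: pF.
Qed.

Lemma frobXq (F : finFieldType) (g : {poly F}) : g ^+ #|F| = g \Po 'X^#|F|.
Proof.
have cp : ([pchar {poly F}]).-nat #|F|.
  by rewrite (eq_pnat _ (@pchar_poly F)); apply: card_pnat.
elim/poly_ind: g => [|g c IH].
  by rewrite comp_poly0 expr0n; case: #|F| (finNzRing_gt1 F).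
rewrite exprDn_pchar // comp_polyD comp_polyM comp_polyX comp_polyC exprMn IH.
by rewrite -rmorphXn /= expf_card.
Qed.

Lemma frobXqm (F : finFieldType) (m : nat) (g : {poly F}) :
  g ^+ (#|F| ^ m) = g \Po 'X^(#|F| ^ m).
Proof.
elim: m g => [|m IH] g; first by rewrite expn0 expr1 comp_polyXr.
rewrite expnSr exprM IH frobXq -comp_polyA comp_Xn_poly -exprM.
by rewrite mulnC.
Qed.

Lemma mulmod (F : fieldType) (f a b : {poly F}) :
  ((a %% f) * (b %% f)) %% f = (a * b) %% f.
Proof. by rewrite modp_mul mulrC modp_mul mulrC. Qed.

Lemma modp_compr (F : fieldType) (f p h : {poly F}) :
  (p \Po (h %% f)) %% f = (p \Po h) %% f.
Proof.
elim/poly_ind: p => [|p c IH]; first by rewrite !comp_poly0.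
rewrite !comp_poly_MXaddC !modpD; congr (_ + _).
by rewrite -[LHS]mulmod IH modp_id mulmod.
Qed.

Lemma modp_compl (F : fieldType) (f p h : {poly F}) :
  f %| (f \Po h) -> ((p %% f) \Po h) %% f = (p \Po h) %% f.
Proof.
move=> dv; rewrite {2}(divp_eq p f) comp_polyD comp_polyM modpD.
by rewrite (modp_eq0 (dvdp_mull _ dv)) add0r.
Qed.

Lemma modp_expm (F : fieldType) (f p : {poly F}) k :
  ((p %% f) ^+ k) %% f = (p ^+ k) %% f.
Proof.
elim: k => [|k IH]; first by rewrite !expr0.
by rewrite !exprS -[LHS]mulmod IH modp_id mulmod.
Qed.

Definition Gp (F : finFieldType) (f : {poly F}) t k : {poly F} :=
  'X^(#|F| ^ (t * k)) %% f.

Lemma f_dvd_comp (F : finFieldType) (f : {poly F}) t k :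
  f %| (f \Po Gp f t k).
Proof.
apply/modp_eq0P; rewrite /Gp modp_compr.
rewrite -frobXqm.
have : (0 < #|F| ^ (t * k))%N by rewrite expn_gt0 (ltn_trans _ (finNzRing_gt1 F)).
case: (#|F| ^ _)%N => // m _; by rewrite exprSr modp_mull.
Qed.

Lemma Gp_comp (F : finFieldType) (f : {poly F}) t a b :
  (Gp f t a \Po Gp f t b) %% f = Gp f t (a + b).
Proof.
rewrite modp_compl ?f_dvd_comp // comp_Xn_poly /Gp modp_expm -exprM.
by rewrite -expnD mulnDr addnC.
Qed.

Lemma sigma_powE (F : finFieldType) (f s : {poly F}) t k :
  s = 'X ^+ (#|F| ^ t) %% f -> sigma_pow f s k = Gp f t k.
Proof.
move=> ->; elim: k => [|k IH]; first by rewrite /sigma_pow /= /Gp muln0 expn0 expr1.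
rewrite /sigma_pow iterS -/(sigma_pow _ _ _) IH.
have -> : 'X^(#|F| ^ t) %% f = Gp f t 1 by rewrite /Gp muln1.
by rewrite Gp_comp add1n.
Qed.

Lemma size_Gp (F : finFieldType) (f : {poly F}) t k n :
  size f = n.+1 -> (size (Gp f t k) <= n)%N.
Proof.
move=> sf; have : f != 0 by rewrite -size_poly_eq0 sf.
by rewrite -(ltn_modp ('X^(#|F| ^ (t * k)))) sf ltnS.
Qed.


Definition run (F : fieldType) (env : seq F) (ins : seq (instr F)) : seq F :=
  foldl (fun env i => rcons env (exec_instr env i)) env ins.

Lemma run_cat (F : fieldType) (e : seq F) a b : run e (a ++ b) = run (run e a) b.
Proof. exact: foldl_cat. Qed.

Lemma run_rcons (F : fieldType) (e : seq F) a i :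
  run e (rcons a i) = rcons (run e a) (exec_instr (run e a) i).
Proof. by rewrite /run -cats1 foldl_cat. Qed.

Lemma run_ext (F : fieldType) (e : seq F) a : exists x, run e a = e ++ x.
Proof.
elim/last_ind: a => [|a i [x IH]]; first by exists [::]; rewrite cats0.
rewrite run_rcons IH; exists (rcons x (exec_instr (e ++ x) i)).
by rewrite rcons_cat.
Qed.

Lemma size_run (F : fieldType) (e : seq F) a : size (run e a) = (size e + size a)%N.
Proof.
elim/last_ind: a => [|a i IH]; first by rewrite addn0.
by rewrite run_rcons size_rcons IH size_rcons addnS.
Qed.

Definition reloc (F : Type) (r : nat -> nat) (i : instr F) : instr F :=
  match i with
  | IConst c => IConst c
  | IAdd a b => IAdd F (r a) (r b)
  | ISub a b => ISub F (r a) (r b)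
  | IMul a b => IMul F (r a) (r b)
  | IInv a => IInv F (r a)
  end.

Lemma exec_reloc (F : fieldType) (r : nat -> nat) (X E : seq F) i :
  (forall j, nth 0 X (r j) = nth 0 E j) -> exec_instr X (reloc r i) = exec_instr E i.
Proof. by move=> H; case: i => /= *; rewrite ?H. Qed.

Definition oval (F : fieldType) (env : seq F) (o : option nat) : F :=
  if o is Some i then nth 0 env i else 0.
Definition ovalid (b : nat) (o : option nat) : bool :=
  if o is Some i then (i < b)%N else true.
Definition hval (F : fieldType) (env : seq F) (h : seq (option nat)) : seq F :=
  map (oval env) h.
Definition hrep (F : fieldType) (env : seq F) (h : seq (option nat)) (c : seq F) :=
  all (ovalid (size env)) h /\ hval env h = c.

Lemma hrep_ext (F : fieldType) (env x : seq F) h c : hrep env h c -> hrep (env ++ x) h c.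
Proof.
case=> /allP va <-; split.
  by apply/allP => o /va; case: o => //= i; rewrite size_cat => /leq_trans; apply; apply: leq_addr.
apply/eq_in_map => o /va; case: o => //= i lt; by rewrite nth_cat lt.
Qed.

Lemma hrep_cat (F : fieldType) (env : seq F) h1 h2 c1 c2 :
  hrep env h1 c1 -> hrep env h2 c2 -> hrep env (h1 ++ h2) (c1 ++ c2).
Proof. by case=> a1 e1 [a2 e2]; split; rewrite ?all_cat ?a1 ?a2 // /hval map_cat -e1 -e2. Qed.

Definition rmap (locs : seq (option nat)) (m base z : nat) (j : nat) : nat :=
  if (j < m)%N then (if nth None locs j is Some i then i else z) else (base + (j - m))%N.

Lemma reloc_run (F : fieldType) (env inp : seq F) locs z (qs : seq (instr F)) :
  all (ovalid (size env)) locs -> hval env locs = inp ->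
  forall rest E, (size inp <= size E)%N -> (forall j, (j < size inp)%N -> nth 0 E j = nth 0 inp j) ->
  (size env + (size E - size inp) + size rest <= z)%N ->
  run (env ++ drop (size inp) E) (map (reloc (rmap locs (size inp) (size env) z)) rest)
   = env ++ drop (size inp) (run E rest).
Proof.
set m := size inp; set base := size env.
move=> va hv; elim=> [|i rest IH] E mE pE zE /=; first by [].
have key : forall j, nth 0 (env ++ drop m E) (rmap locs m base z j) = nth 0 E j.
  move=> j; rewrite /rmap; case: ifP => jm.
    have sl : size locs = m by rewrite /m -hv size_map.
    have := pE j jm; rewrite -hv (nth_map None) ?sl // => ->.
    have : ovalid base (nth None locs j) by apply: (allP va); rewrite mem_nth ?sl.
    case: (nth None locs j) => [k|] /= kb; first by rewrite nth_cat kb.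
    rewrite nth_default // size_cat size_drop.
    by apply: leq_trans zE; rewrite /base -addnA leq_add2l leq_addr.
  rewrite nth_cat ltnNge leq_addr /= addKn nth_drop subnKC //.
  by rewrite leqNgt jm.
rewrite (exec_reloc _ key).
have -> : rcons (env ++ drop m E) (exec_instr E i) = env ++ drop m (rcons E (exec_instr E i)).
  by rewrite drop_rcons // rcons_cat.
rewrite IH //.
- by rewrite size_rcons (leq_trans mE).
- by move=> j jm; rewrite nth_rcons (leq_trans jm mE) pE.
- move: zE; rewrite size_rcons /=; move: mE; clear; lia.
Qed.

Definition omap (locs : seq (option nat)) (m base sq : nat) (j : nat) : option nat :=
  if (j < m)%N then nth None locs j
  else if (j - m < sq)%N then Some (base + (j - m))%N else None.

Definition hfl (n : nat) : seq (option nat) := map Some (iota 0 n.+1).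
Arguments hfl : simpl never.

Definition cstep (F : fieldType) (Q : slp F) (n : nat) (st : seq (instr F))
    (hg hh : seq (option nat)) : seq (instr F) * seq (option nat) :=
  let base := (n.+1 + n + size st)%N in
  let locs := hfl n ++ hg ++ hh in
  let m := size locs in
  let qs := slp_instrs Q in
  let z := (base + size qs)%N in
  (st ++ map (reloc (rmap locs m base z)) qs, map (omap locs m base (size qs)) (slp_outs Q)).

Lemma cstep1 (F : fieldType) (Q : slp F) n st hg hh :
  (cstep Q n st hg hh).1 = st ++ map (reloc (rmap (hfl n ++ hg ++ hh)
         (size (hfl n ++ hg ++ hh)) (n.+1 + n + size st)
         (n.+1 + n + size st + size (slp_instrs Q)))) (slp_instrs Q).
Proof. by []. Qed.

Lemma cstep2 (F : fieldType) (Q : slp F) n st hg hh :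
  (cstep Q n st hg hh).2 = map (omap (hfl n ++ hg ++ hh) (size (hfl n ++ hg ++ hh))
     (n.+1 + n + size st) (size (slp_instrs Q))) (slp_outs Q).
Proof. by []. Qed.

Lemma cstep_ok (F : fieldType) (Q : slp F) (n : nat) (env0 : seq F) st hg hh
    (cf cg ch co : seq F) :
  size env0 = (n.+1 + n)%N ->
  slp_eval Q (cf ++ cg ++ ch) = co ->
  hrep (run env0 st) (hfl n) cf ->
  hrep (run env0 st) hg cg -> hrep (run env0 st) hh ch ->
  (cstep Q n st hg hh).1 = st ++ map (reloc (rmap (hfl n ++ hg ++ hh)
         (size (hfl n ++ hg ++ hh)) (n.+1 + n + size st)
         (n.+1 + n + size st + size (slp_instrs Q))))
       (slp_instrs Q) /\
  hrep (run env0 (cstep Q n st hg hh).1) (cstep Q n st hg hh).2 co.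
Proof.
move=> se0 qok hf hg' hh'; split; first by rewrite cstep1 size_cat size_map.
rewrite cstep1 cstep2.
have hl := hrep_cat hf (hrep_cat hg' hh').
set locs := hfl n ++ hg ++ hh in hl *.
set env := run env0 st.
have senv : size env = (n.+1 + n + size st)%N by rewrite size_run se0.
case: hl => va hv.
rewrite -/env senv in va; rewrite -/env in hv.
set inp := cf ++ cg ++ ch in hv *.
have sm : size locs = size inp by rewrite -hv size_map.
rewrite run_cat -/env sm.
have := @reloc_run F env inp locs (n.+1 + n + size st + size (slp_instrs Q))%N
  (slp_instrs Q).
rewrite senv => /(_ va hv (slp_instrs Q) inp (leqnn _) (fun _ _ => erefl)).
rewrite subnn drop_size cats0 addn0 => /(_ (leqnn _)) ->.
set R := run inp (slp_instrs Q).
have sR : size R = (size inp + size (slp_instrs Q))%N by rewrite size_run.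
move: qok; rewrite /slp_eval -/(run _ _) -/R => <-.
split.
  apply/allP => o /mapP [j _ ->]; rewrite /omap size_cat senv size_drop sR.
  case: ifP => jm.
    have : ovalid (n.+1 + n + size st) (nth None locs j) by apply: (allP va); rewrite mem_nth ?sm.
    by case: (nth None locs j) => //= k kb; rewrite ltn_addr.
  case: ifP => //= js; by rewrite addKn ltn_add2l.
rewrite /hval -map_comp; apply/eq_map => j /=; rewrite /omap.
case: ifP => jm.
  have [x Rx] := run_ext inp (slp_instrs Q).
  rewrite /R Rx nth_cat jm -hv (nth_map None) ?sm //.
  have : ovalid (n.+1 + n + size st) (nth None locs j) by apply: (allP va); rewrite mem_nth ?sm.
  by case: (nth None locs j) => //= k kb; rewrite nth_cat senv kb.
case: ifP => js /=.
  by rewrite nth_cat senv ltnNge leq_addr /= addKn nth_drop subnKC // leqNgt jm.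
by rewrite nth_default // sR; move: js jm; clear; lia.
Qed.


Definition extends (F : Type) (st st' : seq (instr F)) (c : nat) :=
  exists e, st' = st ++ e /\ (size e <= c)%N.

Lemma extends_trans (F : Type) (a b c : seq (instr F)) x y :
  extends a b x -> extends b c y -> extends a c (x + y).
Proof.
case=> e1 [-> s1] [e2 [-> s2]]; exists (e1 ++ e2); rewrite catA; split => //.
by rewrite size_cat leq_add.
Qed.

Lemma extends_refl (F : Type) (a : seq (instr F)) x : extends a a x.
Proof. by exists [::]; rewrite cats0. Qed.

Lemma extends_le (F : Type) (a b : seq (instr F)) x y :
  (x <= y)%N -> extends a b x -> extends a b y.
Proof. by move=> le [e [-> s]]; exists e; split => //; apply: leq_trans le. Qed.

Lemma hrep_run (F : fieldType) (env0 : seq F) st e h c :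
  hrep (run env0 st) h c -> hrep (run env0 (st ++ e)) h c.
Proof. rewrite run_cat; have [x ->] := run_ext (run env0 st) e; exact: hrep_ext. Qed.

Lemma hrep_extends (F : fieldType) (env0 : seq F) st st' k h c :
  extends st st' k -> hrep (run env0 st) h c -> hrep (run env0 st') h c.
Proof. by case=> e [-> _]; apply: hrep_run. Qed.

Definition modcomp_ok (F : fieldType) (Q : slp F) n :=
  forall f g h : {poly F}, size f = n.+1 -> (size g <= n)%N -> (size h <= n)%N ->
      slp_eval Q (coefs n.+1 f ++ coefs n g ++ coefs n h) = coefs n ((g \Po h) %% f).

Definition env0 (F : fieldType) n (f s : {poly F}) := coefs n.+1 f ++ coefs n s.

Lemma size_coefs (F : fieldType) k (p : {poly F}) : size (coefs k p) = k.
Proof. by rewrite size_map size_iota. Qed.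

Lemma cstep_good (F : finFieldType) (Q : slp F) n (f s : {poly F}) t st hg hh a b :
  modcomp_ok Q n -> size f = n.+1 ->
  hrep (run (env0 n f s) st) (hfl n) (coefs n.+1 f) ->
  hrep (run (env0 n f s) st) hg (coefs n (Gp f t a)) ->
  hrep (run (env0 n f s) st) hh (coefs n (Gp f t b)) ->
  extends st (cstep Q n st hg hh).1 (size (slp_instrs Q)) /\
  hrep (run (env0 n f s) (cstep Q n st hg hh).1) (cstep Q n st hg hh).2
     (coefs n (Gp f t (a + b))).
Proof.
move=> qok sf h1 h2 h3.
have se : size (env0 n f s) = (n.+1 + n)%N by rewrite size_cat !size_coefs.
have := cstep_ok se (qok _ _ _ sf (size_Gp t a sf) (size_Gp t b sf)) h1 h2 h3.
rewrite Gp_comp => -[_ H]; split => //.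
by rewrite cstep1; eexists; split; first reflexivity; rewrite size_map.
Qed.

Fixpoint powp (F : fieldType) (Q : slp F) n (k : nat) st hg (m : nat)
    : seq (instr F) * seq (option nat) :=
  match k with
  | 0 => (st, hg)
  | k'.+1 => if (m <= 1)%N then (st, hg) else
      let p1 := powp Q n k' st hg m./2 in
      let p2 := cstep Q n p1.1 p1.2 p1.2 in
      if odd m then cstep Q n p2.1 p2.2 hg else p2
  end.

Lemma powp_ok (F : finFieldType) (Q : slp F) n (f s : {poly F}) t :
  modcomp_ok Q n -> size f = n.+1 ->
  forall k m st hg a, (0 < m <= k)%N ->
  hrep (run (env0 n f s) st) (hfl n) (coefs n.+1 f) ->
  hrep (run (env0 n f s) st) hg (coefs n (Gp f t a)) ->
  extends st (powp Q n k st hg m).1 (2 * trunc_log 2 m * size (slp_instrs Q)) /\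
  hrep (run (env0 n f s) (powp Q n k st hg m).1) (powp Q n k st hg m).2
     (coefs n (Gp f t (a * m))).
Proof.
move=> qok sf; elim=> [|k IH] m st hg a mk hf hg'; first by move: mk; clear; lia.
rewrite /=; case: ifP => m1.
  have -> : m = 1%N by move: mk m1; clear; lia.
  by rewrite muln1; split => //; apply: extends_refl.
have m2 : (0 < m./2 <= k)%N by move: mk m1; clear; lia.
have [e1 r1] := IH _ st hg a m2 hf hg'.
set p1 := powp Q n k st hg m./2 in e1 r1 *.
have hf1 := hrep_extends e1 hf.
have [e2 r2] := cstep_good qok sf hf1 r1 r1.
set p2 := cstep Q n p1.1 p1.2 p1.2 in e2 r2 *.
have hf2 := hrep_extends e2 hf1.
have tl : trunc_log 2 m = (trunc_log 2 m./2).+1 by rewrite trunc_log2S // ltnNge m1.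
have hm : m = (m./2 + m./2 + odd m)%N by move: (odd_double_half m); rewrite -addnn; lia.
case: ifP => om.
  have [e3 r3] := cstep_good qok sf hf2 r2 (hrep_extends e2 (hrep_extends e1 hg')).
  split.
    apply: extends_le (extends_trans (extends_trans e1 e2) e3).
    rewrite tl; lia.
  have -> : (a * m = a * m./2 + a * m./2 + a)%N by rewrite om in hm; rewrite {1}hm; lia.
  exact: r3.
split.
  apply: extends_le (extends_trans e1 e2 ).
  rewrite tl; lia.
have -> : (a * m = a * m./2 + a * m./2)%N by rewrite om in hm; rewrite {1}hm; lia.
exact: r2.
Qed.

Definition okps (ps : seq (nat * nat)) := all (fun pe => prime pe.1 && (0 < pe.2)%N) ps.

Lemma fvalue_cons pe ps : fvalue (pe :: ps) = (pe.1 ^ pe.2 * fvalue ps)%N.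
Proof. by rewrite /fvalue big_cons. Qed.

Lemma fvalue_cat a b : fvalue (a ++ b) = (fvalue a * fvalue b)%N.
Proof. by rewrite /fvalue big_cat. Qed.

Lemma fvalue_gt0 ps : okps ps -> (0 < fvalue ps)%N.
Proof.
elim: ps => [|pe ps IH] /=; first by rewrite /fvalue big_nil.
case/andP => /andP [pp _] o; rewrite fvalue_cons muln_gt0 expn_gt0 prime_gt0 //=.
exact: IH.
Qed.

Lemma fvalue_dvd ps pe : okps ps -> pe \in ps -> (pe.1 %| fvalue ps)%N.
Proof.
elim: ps => [|x ps IH] //= /andP [/andP [px ex] o]; rewrite inE fvalue_cons.
case/orP => [/eqP ->|pin]; last by rewrite dvdn_mull // IH.
by rewrite dvdn_mulr // dvdn_exp.
Qed.

Lemma Lmul a b : (0 < a)%N -> (0 < b)%N ->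
  (trunc_log 2 a + trunc_log 2 b <= trunc_log 2 (a * b))%N.
Proof.
move=> a0 b0; apply: trunc_log_max => //.
by rewrite expnD leq_mul // trunc_logP.
Qed.

Definition solve_base (F : fieldType) (Q : slp F) n st hg (ps : seq (nat * nat)) :=
  match ps with
  | [::] => (st, [::])
  | pe :: _ => powp Q n (pe.1 ^ pe.2.-1) st hg (pe.1 ^ pe.2.-1)
  end.

Fixpoint solve (F : fieldType) (Q : slp F) n (k : nat) st hg (ps : seq (nat * nat))
    : seq (instr F) * seq (option nat) :=
  match k with
  | 0 => solve_base Q n st hg ps
  | k'.+1 => if (size ps <= 1)%N then solve_base Q n st hg ps else
     let A := take (size ps)./2 ps in
     let B := drop (size ps)./2 ps in
     let p1 := powp Q n (fvalue B) st hg (fvalue B) in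
     let p2 := solve Q n k' p1.1 p1.2 A in
     let p3 := powp Q n (fvalue A) p2.1 hg (fvalue A) in
     let p4 := solve Q n k' p3.1 p3.2 B in
     (p4.1, p2.2 ++ p4.2)
  end.

Lemma base_ok (F : finFieldType) (Q : slp F) n (f s : {poly F}) t :
  modcomp_ok Q n -> size f = n.+1 ->
  forall k st hg a ps, (size ps <= 1)%N -> okps ps ->
  hrep (run (env0 n f s) st) (hfl n) (coefs n.+1 f) ->
  hrep (run (env0 n f s) st) hg (coefs n (Gp f t a)) ->
  extends st (solve_base Q n st hg ps).1
     (2 * trunc_log 2 (fvalue ps) * k.+1 * size (slp_instrs Q)) /\
  hrep (run (env0 n f s) (solve_base Q n st hg ps).1) (solve_base Q n st hg ps).2
     (flatten [seq coefs n (Gp f t (a * (fvalue ps %/ pe.1))) | pe <- ps]).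
Proof.
move=> qok sf k st hg a [|[p e] [|? ?]] //= _.
  by move=> _ _ _; split; [apply: extends_refl | split].
rewrite andbT => /andP [pp e0] hf hg'.
have m0 : (0 < p ^ e.-1 <= p ^ e.-1)%N by rewrite leqnn expn_gt0 prime_gt0.
have [e1 r1] := powp_ok qok sf m0 hf hg'.
split.
  apply: extends_le e1; rewrite fvalue_cons /fvalue big_nil muln1.
  have L : (trunc_log 2 (p ^ e.-1) <= trunc_log 2 (p ^ e))%N.
    by apply: leq_trunc_log; rewrite -{2}(prednK e0) expnS leq_pmull // prime_gt0.
  rewrite /=; apply: leq_mul => //; apply: (@leq_trans (2 * trunc_log 2 (p ^ e))).
    by rewrite leq_mul2l L.
  by rewrite leq_pmulr.
rewrite cats0 fvalue_cons /fvalue big_nil muln1 -(prednK e0) expnS mulKn ?prime_gt0 //; by rewrite prednK.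
Qed.

Lemma solve_ok (F : finFieldType) (Q : slp F) n (f s : {poly F}) t :
  modcomp_ok Q n -> size f = n.+1 ->
  forall k ps st hg a, (size ps <= 2 ^ k)%N -> okps ps ->
  hrep (run (env0 n f s) st) (hfl n) (coefs n.+1 f) ->
  hrep (run (env0 n f s) st) hg (coefs n (Gp f t a)) ->
  extends st (solve Q n k st hg ps).1
     (2 * trunc_log 2 (fvalue ps) * k.+1 * size (slp_instrs Q)) /\
  hrep (run (env0 n f s) (solve Q n k st hg ps).1) (solve Q n k st hg ps).2
     (flatten [seq coefs n (Gp f t (a * (fvalue ps %/ pe.1))) | pe <- ps]).
Proof.
move=> qok sf; elim=> [|k IH] ps st hg a sp ok hf hg'.
  by apply: base_ok.
rewrite /=; case: ifP => s1; first by apply: base_ok.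
set A := take (size ps)./2 ps; set B := drop (size ps)./2 ps.
have psAB : ps = A ++ B by rewrite cat_take_drop.
have okA : okps A by move: ok; rewrite psAB /okps all_cat => /andP[].
have okB : okps B by move: ok; rewrite psAB /okps all_cat => /andP[].
have hs := odd_double_half (size ps); rewrite -addnn in hs.
move/negbT: s1; rewrite -ltnNge => s1.
have sA : (size A <= 2 ^ k)%N.
  rewrite size_take; case: ifP => h; move: sp h; rewrite expnS; lia.
have sB : (size B <= 2 ^ k)%N by rewrite size_drop; move: sp; rewrite expnS; lia.
have dA := fvalue_gt0 okA; have dB := fvalue_gt0 okB.
have mB : (0 < fvalue B <= fvalue B)%N by rewrite dB leqnn.
have mA : (0 < fvalue A <= fvalue A)%N by rewrite dA leqnn.
have [e1 r1] := powp_ok qok sf mB hf hg'.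
set p1 := powp Q n (fvalue B) st hg (fvalue B) in e1 r1 *.
have hf1 := hrep_extends e1 hf.
have [e2 r2] := IH A p1.1 p1.2 (a * fvalue B) sA okA hf1 r1.
set p2 := solve Q n k p1.1 p1.2 A in e2 r2 *.
have hf2 := hrep_extends e2 hf1.
have hg2 := hrep_extends e2 (hrep_extends e1 hg').
have [e3 r3] := powp_ok qok sf mA hf2 hg2.
set p3 := powp Q n (fvalue A) p2.1 hg (fvalue A) in e3 r3 *.
have hf3 := hrep_extends e3 hf2.
have [e4 r4] := IH B p3.1 p3.2 (a * fvalue A) sB okB hf3 r3.
set p4 := solve Q n k p3.1 p3.2 B in e4 r4 *.
have dps : fvalue ps = (fvalue A * fvalue B)%N by rewrite {1}psAB fvalue_cat.
split.
  apply: extends_le (extends_trans (extends_trans (extends_trans e1 e2) e3) e4).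
  have := Lmul dA dB; rewrite -dps.
  set LA := trunc_log 2 (fvalue A); set LB := trunc_log 2 (fvalue B).
  set L := trunc_log 2 (fvalue ps); set q := size (slp_instrs Q).
  move=> H.
  have -> : (2 * LB * q + 2 * LA * k.+1 * q + 2 * LA * q + 2 * LB * k.+1 * q
     = 2 * (LA + LB) * k.+2 * q)%N by lia.
  by rewrite leq_mul2r leq_mul2r leq_mul2l H !orbT.
rewrite {2}psAB map_cat flatten_cat; apply: hrep_cat.
  have -> : [seq coefs n (Gp f t (a * (fvalue ps %/ pe.1))) | pe <- A] =
            [seq coefs n (Gp f t (a * fvalue B * (fvalue A %/ pe.1))) | pe <- A].
    apply/eq_in_map => pe pin; rewrite dps mulnC -mulnA muln_divA ?(fvalue_dvd okA) //.
    by rewrite mulnC [(fvalue A * _)%N]mulnC.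
  exact: hrep_extends e4 (hrep_extends e3 r2).
have -> : [seq coefs n (Gp f t (a * (fvalue ps %/ pe.1))) | pe <- B] =
          [seq coefs n (Gp f t (a * fvalue A * (fvalue B %/ pe.1))) | pe <- B].
  by apply/eq_in_map => pe pin; rewrite dps -mulnA (muln_divA (fvalue A) (fvalue_dvd okB pin)).
exact: r4.
Qed.


Lemma nth_coefs (F : fieldType) k (p : {poly F}) i : (i < k)%N -> nth 0 (coefs k p) i = p`_i.
Proof. by move=> ik; rewrite (nth_map 0%N) ?size_iota // nth_iota. Qed.

Theorem proposition3 :
  exists K : nat,
  forall (F : finFieldType) (M C : nat -> nat),
    mul_cost_bound F M -> modcomp_cost_bound F C ->
  forall (n : nat) (ps : seq (nat * nat)),
    factored_form ps ->
    let d := fvalue ps in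
    let l := size ps in
    exists P : slp F,
      (slp_cost P <= K * (C n * (up_log 2 l).+1 * (up_log 2 d).+1 + l * M n))%N /\
      forall (f s : {poly F}) (t : nat),
        size f = n.+1 ->
        s = 'X ^+ (#|F| ^ t) %% f ->
        slp_eval P (coefs n.+1 f ++ coefs n s) =
          flatten [seq coefs n (sigma_pow f s (d %/ pe.1)) | pe <- ps].
Proof.
exists 2%N => F M C _ HC n ps /andP [_ ok] d l.
have [Q [cQ qok]] := HC n.
have qok' : modcomp_ok Q n by [].
set k := up_log 2 l.
set hg := map Some (iota n.+1 n).
set res := solve Q n k [::] hg ps.
set N := (n.+1 + n + size res.1)%N.
exists (SLP res.1 (map (fun o => odflt N o) res.2)).
have kl : (size ps <= 2 ^ k)%N by apply: up_logP.
have d0 : (0 < d)%N by apply: fvalue_gt0.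
have key : forall (f s : {poly F}) t, size f = n.+1 -> s = 'X ^+ (#|F| ^ t) %% f ->
  extends [::] res.1 (2 * trunc_log 2 (fvalue ps) * k.+1 * size (slp_instrs Q)) /\
  hrep (run (env0 n f s) res.1) res.2
     (flatten [seq coefs n (Gp f t (1 * (fvalue ps %/ pe.1))) | pe <- ps]).
move=> f s t sf sE.
have se : size (env0 n f s) = (n.+1 + n)%N by rewrite size_cat !size_coefs.
have run0 : run (env0 n f s) [::] = env0 n f s by [].
have hf : hrep (run (env0 n f s) [::]) (hfl n) (coefs n.+1 f).
  rewrite run0; split.
    by apply/allP => o /mapP [i]; rewrite mem_iota add0n => /andP [_ ilt] ->; rewrite /ovalid se ltn_addr.
  rewrite /hval /hfl -map_comp [RHS]/coefs; apply/eq_in_map => i.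
  rewrite mem_iota add0n => /andP [_ ilt].
  by rewrite /comp /oval /env0 nth_cat size_coefs ilt nth_coefs.
have hs : hrep (run (env0 n f s) [::]) hg (coefs n (Gp f t 1)).
  rewrite run0; split.
    by apply/allP => o /mapP [i]; rewrite mem_iota => /andP [_ ilt] ->; rewrite /ovalid se.
  rewrite /Gp muln1 -sE /hval /hg -map_comp -{1}(addn0 n.+1) iotaDl -map_comp [RHS]/coefs.
  apply/eq_in_map => i; rewrite mem_iota add0n => /andP [_ ilt].
  by rewrite /comp /oval /env0 nth_cat size_coefs ltnNge leq_addr /= addKn !nth_coefs.
have := solve_ok qok' sf kl ok hf hs. move=> HH. exact HH.
split.
  have [|[e' [-> se']] _] := key 'X^n ('X ^+ (#|F| ^ 0) %% 'X^n) 0%N _ erefl.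
    by rewrite size_polyXn.
  rewrite /slp_cost /=; apply: (leq_trans se').
  have Ld : (trunc_log 2 d <= up_log 2 d)%N.
    rewrite -(@leq_exp2l 2) //; apply: leq_trans (trunc_logP _ _) (up_logP _ _) => //.
  rewrite mulnDr; apply: leq_trans (leq_addr _ _).
  have h1 : (trunc_log 2 d * (k.+1 * size (slp_instrs Q)) <= (up_log 2 d).+1 * (k.+1 * C n))%N.
    by apply: leq_mul; [exact: leqW | rewrite leq_mul2l cQ orbT].
  rewrite -/d; move: h1; clear; lia.
move=> f s t sf sE.
have se : size (env0 n f s) = (n.+1 + n)%N by rewrite size_cat !size_coefs.
have [_ [va hv]] := key f s t sf sE.
transitivity (hval (run (env0 n f s) res.1) res.2).
  rewrite /slp_eval /hval -map_comp; apply/eq_in_map => o oin.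
  case: o oin => [i|] _; first by [].
  by rewrite /comp /oval nth_default // size_run se.
rewrite hv; congr flatten; apply/eq_map => pe.
by rewrite (sigma_powE _ sE) mul1n.
Qed.
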